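(* Let $H$ be a tree of order at least two. Then $S_2(H)$ (for any function $\alpha$) is a DPDP-tree. Moreover, $S_2(H)$ is not a minimal DPDP-tree if and only if there is a tree $Q$ in $H-(L_H\cup S_H)$ such that $Q\circ K_1$ is a subtree of $H-L_H$ and $d_H(x)=d_Q(x)+1$ for each vertex $x$ of $Q$.
   Context: Graphs are finite. A leaf is a vertex of degree one; a support vertex is a vertex adjacent to a leaf; $L_H$ and $S_H$ denote the sets of leaves and of support vertices of $H$. The corona $Q\circ K_1$ is obtained from $Q$ by attaching one pendant edge to each vertex of $Q$; ''$Q\circ K_1$ is a subtree of $H-L_H$'' means that $H-L_H$ contains $Q$ together with, for each vertex of $Q$, a distinct additional neighbor outside $Q$, forming a copy of $Q\circ K_1$. A set $D\subseteq V(G)$ is dominating if every vertex outside $D$ has a neighbor in $D$; $P$ is paired-dominating if it is dominating and the subgraph induced by $P$ has a perfect matching. A DPDP-graph (DPDP-tree if a tree) is a graph $G$ admitting disjoint sets $D,P$ with $V(G)=D\cup P$, $D$ dominating and $P$ paired-dominating; a minimal DPDP-graph is a DPDP-graph no proper spanning subgraph of which is a DPDP-graph. 2-subdivision graph: for a graph $H$ with no isolated vertex and $\alpha:L_H\to\mathbb{N}=\{1,2,\dots\}$, $S_2(H)$ has vertex set $(V_H\setminus L_H)\cup\{(v,i): v\in L_H, 1\le i\le \alpha(v)\}$ together with two new vertices $u_e,v_e$ for each edge $e=uv$ of $H$. Its edges are: $u_ev_e$ for each edge $e=uv$; for $v\in V_H\setminus L_H$, $vv_e$ for each edge $e$ at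 $v$; for $v\in L_H$ with incident edge $e$, the edges $v_e(v,i)$, $1\le i\le\alpha(v)$. *)

(* Defs.v *)
From mathcomp Require Import all_boot.
Set Implicit Arguments. Unset Strict Implicit. Unset Printing Implicit Defensive.

Section Graphs.
Variable T : finType.

Definition sgraph (V : {set T}) (e : rel T) : Prop :=
  [/\ symmetric e, irreflexive e & forall x y, e x y -> (x \in V) && (y \in V)].

Definition deg (V : {set T}) (e : rel T) (x : T) : nat := #|[set y in V | e x y]|.

Definition is_leaf (V : {set T}) (e : rel T) (x : T) : bool :=
  (x \in V) && (deg V e x == 1).

Definition is_support (V : {set T}) (e : rel T) (x : T) : bool :=
  (x \in V) && [exists y, e x y && is_leaf V e y].

Definition connected (V : {set T}) (e : rel T) : Prop :=
  V != set0 /\ {in V &, forall x y, connect e x y}.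

Definition acyclic (e : rel T) : Prop :=
  forall s : seq T, uniq s -> 2 < size s -> ~~ cycle e s.

Definition is_tree (V : {set T}) (e : rel T) : Prop :=
  [/\ sgraph V e, connected V e & acyclic e].

Definition dominating (V : {set T}) (e : rel T) (D : {set T}) : Prop :=
  D \subset V /\ forall x, x \in V -> x \notin D -> exists2 y, y \in D & e x y.

(* P dominating and G[P] has a perfect matching m (an involution without
   fixed points on P along edges) *)
Definition paired_dominating (V : {set T}) (e : rel T) (P : {set T}) : Prop :=
  dominating V e P /\
  exists m : T -> T, forall x, x \in P ->
    [/\ m x \in P, m x != x, m (m x) = x & e x (m x)].

Definition DPDP (V : {set T}) (e : rel T) : Prop :=
  exists D P : {set T}, [/\ D :&: P = set0, D :|: P = V,
                            dominating V e D & paired_dominating V e P].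

Definition minimal_DPDP (V : {set T}) (e : rel T) : Prop :=
  DPDP V e /\
  forall e' : rel T, symmetric e' -> subrel e' e ->
    (exists x y, e x y && ~~ e' x y) -> ~ DPDP V e'.

End Graphs.

(* The 2-subdivision graph S_2(H) of H = ([set: T], e) with multiplicities
   alpha (only used on leaves).  Vertices:
   - inl (inl v)        : original vertex v (v not a leaf)
   - inl (inr (u, v))   : subdivision vertex u_e of the edge e = uv
   - inr (existT v i)   : the copy (v, i+1) of a leaf v, i < alpha v *)
Section S2.
Variables (T : finType) (e : rel T) (alpha : T -> nat).

Definition S2T : finType := ((T + (T * T)) + {v : T & 'I_(alpha v)})%type.

Definition leafH (v : T) := is_leaf [set: T] e v.

Definition S2valid (x : S2T) : bool :=
  match x with
  | inl (inl v) => ~~ leafH v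
  | inl (inr (u, v)) => e u v
  | inr (existT v _) => leafH v
  end.

Definition S2V : {set S2T} := [set x | S2valid x].

Definition S2e0 (x y : S2T) : bool :=
  match x, y with
  | inl (inr (u, v)), inl (inr (u', v')) => [&& e u v, u' == v & v' == u]
  | inl (inl u), inl (inr (u', v)) => [&& ~~ leafH u, u' == u & e u v]
  | inl (inr (v, u)), inr (existT v' _) => [&& leafH v, v' == v & e v u]
  | _, _ => false
  end.

Definition S2e : rel S2T := fun x y => S2e0 x y || S2e0 y x.

End S2.

Arguments S2V {T} e alpha.
Arguments S2e {T} e alpha.

(* Main.v *)
Require Import Defs.
From mathcomp Require Import all_boot.
From Stdlib Require Import Classical.
Set Implicit Arguments. Unset Strict Implicit. Unset Printing Implicit Defensive.


Notation O alpha x := (@inl _ {w_ : _ & 'I_(alpha w_)} (@inl _ (_ * _) x)).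
Notation Sb alpha u v := (@inl _ {w_ : _ & 'I_(alpha w_)} (@inr _ (_ * _) (u, v))).
Notation Lf alpha v i := (@inr (_ + (_ * _)) {w_ : _ & 'I_(alpha w_)} (existT _ v i)).

Section Base.
Variables (T : finType) (e : rel T) (alpha : T -> nat).
Hypotheses (esym : symmetric e) (eirr : irreflexive e).

Notation ST := (S2T alpha).

Notation leaf := (leafH e).
Notation G := (S2e e alpha).

Lemma S2e_sym : symmetric G.
Proof. by move=> x y; rewrite /S2e orbC. Qed.

Lemma S2eP_O x y : G (O alpha x) y -> ~~ leaf x /\ exists v, e x v /\ y = Sb alpha x v.
Proof.
case: y => [[y|[a b]]|[w j]] //=; rewrite /S2e /=; try by [].
rewrite orbF => /and3P [h /eqP -> h2]; split => //; by exists b.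
Qed.

Lemma S2eP_Lf v i y : G (Lf alpha v i) y -> leaf v /\ exists u, e v u /\ y = Sb alpha v u.
Proof.
case: y => [[y|[a b]]|[w j]] //=; rewrite /S2e /=; try by [].
move=> /and3P [h /eqP -> h2]; split => //; by exists b.
Qed.

Lemma S2eP_Sb u v y : G (Sb alpha u v) y -> e u v /\
  (y = Sb alpha v u \/ (y = O alpha u /\ ~~ leaf u) \/ (leaf u /\ exists i, y = Lf alpha u i)).
Proof.
case: y => [[y|[a b]]|[w j]] //=; rewrite /S2e /=.
- by move=> /and3P [h /eqP -> h2]; split => //; right; left.
- case/orP => /and3P [h /eqP eb /eqP ea]; subst.
    by split => //; left.
  by split; [rewrite esym|left].
- rewrite orbF => /and3P [h /eqP ew h2]; subst; split => //; right; right.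
  split => //; by exists j.
Qed.

Lemma S2e_OSb x v : ~~ leaf x -> e x v -> G (O alpha x) (Sb alpha x v).
Proof. by move=> h1 h2; rewrite /S2e /= h1 eqxx h2. Qed.
Lemma S2e_SbSb u v : e u v -> G (Sb alpha u v) (Sb alpha v u).
Proof. by move=> h; rewrite /S2e /= h !eqxx. Qed.
Lemma S2e_SbLf u v i : leaf u -> e u v -> G (Sb alpha u v) (Lf alpha u i).
Proof. by move=> h1 h2; rewrite /S2e /= h1 eqxx h2. Qed.

Lemma validO x : (O alpha x \in S2V e alpha) = ~~ leaf x.
Proof. by rewrite inE. Qed.
Lemma validSb u v : (Sb alpha u v \in S2V e alpha) = e u v.
Proof. by rewrite inE. Qed.
Lemma validLf v i : (Lf alpha v i \in S2V e alpha) = leaf v.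
Proof. by rewrite inE. Qed.

End Base.

Section Tree.
Variables (T : finType) (e : rel T).
Hypotheses (esym : symmetric e) (eirr : irreflexive e) (eacyc : acyclic e).
Notation leaf := (leafH e).

Lemma leaf_uniq v u w : leaf v -> e v u -> e v w -> u = w.
Proof.
rewrite /leafH /is_leaf /deg inE /= => /cards1P [x hx] hu hw.
have : u \in [set y in [set: T] | e v y] by rewrite inE in_setT hu.
have : w \in [set y in [set: T] | e v y] by rewrite inE in_setT hw.
by rewrite hx !inE => /eqP -> /eqP ->.
Qed.

Lemma two (hasnb : forall v, exists u, e v u) v u :
  ~~ leaf v -> exists2 w, e v w & w != u.
Proof.
move=> nl; case: (boolP [exists w, e v w && (w != u)]).
  by case/existsP => w /andP [h1 h2]; exists w.
rewrite negb_exists => /forallP H; exfalso; move: nl; apply/negP/negPn.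
rewrite /leafH /is_leaf in_setT /deg; apply/cards1P; exists u.
apply/setP => y; rewrite !inE /=.
have [w hw] := hasnb v.
apply/idP/idP.
  by move=> hy; move: (H y); rewrite hy /= negbK.
move/eqP => ->; move: (H w); rewrite hw /= negbK => /eqP <-; done.
Qed.

Lemma no_cycle a p : path e a p -> uniq (a :: p) -> 1 < size p ->
  e (last a p) a -> False.
Proof.
move=> hp hu hs hl.
have := eacyc hu; rewrite /= ltnS => /(_ hs); apply/negP/negPn.
by rewrite /= rcons_path hp hl.
Qed.

End Tree.

Lemma symI (T : finType) (e : rel T) : symmetric e -> forall x y, e x y -> e y x.
Proof. by move=> s x y; rewrite s. Qed.

Section Construct.
Variables (T : finType) (e : rel T) (alpha : T -> nat).
Hypotheses (esym : symmetric e) (eirr : irreflexive e).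
Notation leaf := (leafH e).
Notation G := (S2e e alpha).
Notation ST := (S2T alpha).
Notation V := (S2V e alpha).
Hypothesis apos : forall v, leaf v -> 0 < alpha v.
Hypothesis hasnb : forall v, exists u, e v u.
Hypothesis two : forall v u, ~~ leaf v -> exists2 w, e v w & w != u.
Variables (Q : {set T}) (f : T -> T).
Hypotheses (q1 : forall x, x \in Q -> ~~ leaf x)
  (q2 : forall x, x \in Q -> [/\ f x \notin Q, ~~ leaf (f x) & e x (f x)])
  (q3 : {in Q &, injective f})
  (q4 : forall x v, x \in Q -> e x v -> v != f x -> v \in Q)
  (q5 : forall x, x \in Q -> exists2 y, y \in Q & e x y).

Definition inP (x : ST) : bool :=
  match x with
  | inl (inl v) => v \in Q
  | inl (inr (u, v)) => ~~ ((u \in Q) && (v \in Q) || (v \in Q) && (u == f v))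
  | inr _ => false
  end.

Definition mt (x : ST) : ST :=
  match x with
  | inl (inl v) => Sb alpha v (f v)
  | inl (inr (u, v)) => if (u \in Q) && (v == f u) then O alpha u else Sb alpha v u
  | inr _ => x
  end.

Variable rem : rel ST.
Hypothesis remD : forall a c, rem a c -> ~~ inP a && ~~ inP c.
Definition e' : rel ST := fun a c => G a c && ~~ rem a c.

Lemma e'I a c : G a c -> inP a || inP c -> e' a c.
Proof.
move=> h1 h2; rewrite /e' h1 /=; apply/negP => /remD /andP [h3 h4].
by move: h2; rewrite (negbTE h3) (negbTE h4).
Qed.

Lemma leafQ v : leaf v -> v \notin Q.
Proof. by move=> hl; apply/negP => /q1; rewrite hl. Qed.

Lemma construct : DPDP V e'.
Proof.
pose D := [set x in V | ~~ inP x]; pose P := [set x in V | inP x].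
exists D, P; split.
- by apply/setP => x; rewrite !inE; case: (inP x); case: (S2valid e x).
- by apply/setP => x; rewrite !inE; case: (inP x); case: (S2valid e x).
- split; first by apply/subsetP => x; rewrite inE => /andP [].
  move=> x xV; rewrite inE xV /= negbK => xP.
  case: x xV xP => [[v|[u v]]|[v i]] //=; rewrite inE /=.
  + move=> nl vQ; have [y yQ hy] := q5 vQ.
    exists (Sb alpha v y); first by rewrite inE validSb hy /= vQ yQ.
    by apply: e'I; [apply: S2e_OSb | rewrite /= vQ].
  + move=> huv hP; have hP' := hP.
    case hb: ((u \in Q) && (v == f u)).
      exists (Sb alpha v u).
        rewrite inE validSb esym huv /=; by rewrite hb orbT.
      by apply: e'I; [apply: S2e_SbSb | rewrite /= hP].
    have uQ : u \notin Q.
      apply/negP => uQ; move: hP; rewrite uQ /=.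
      have vne : v != f u by move: hb; rewrite uQ /= => ->.
      by rewrite (q4 uQ huv vne).
    case hl: (leaf u).
      exists (Lf alpha u (Ordinal (apos hl))); first by rewrite inE validLf hl.
      by apply: e'I; [apply: S2e_SbLf | rewrite /= hP].
    exists (O alpha u); first by rewrite inE validO hl /= (negbTE uQ).
    by apply: e'I; [rewrite S2e_sym; apply: S2e_OSb; rewrite ?hl | rewrite /= hP].
- split.
  split; first by apply/subsetP => x; rewrite inE => /andP [].
  move=> x xV; rewrite inE xV /= => xP.
  case: x xV xP => [[v|[u v]]|[v i]] //=; rewrite inE /=.
  + move=> nl vQ.
    have [u hu] := hasnb v; have [w hw wu] := two u nl.
    have [y hy yg] : exists2 y, e v y & ~~ ((y \in Q) && (v == f y)).
      case gu: ((u \in Q) && (v == f u)); last by exists u; rewrite ?gu.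
      case gw: ((w \in Q) && (v == f w)); last by exists w; rewrite ?gw.
      case/andP: gu => uQ /eqP fu; case/andP: gw => wQ /eqP fw.
      by move: wu; rewrite (q3 wQ uQ (etrans (Logic.eq_sym fw) fu)) eqxx.
    exists (Sb alpha v y); first by rewrite inE validSb hy /= (negbTE vQ) /=.
    apply: e'I; [apply: S2e_OSb | rewrite /= (negbTE vQ) /=] => //.
  + move=> huv /negPn /orP [/andP [uQ vQ] | /andP [vQ /eqP uf]].
      exists (O alpha u); first by rewrite inE validO q1.
      apply: e'I; last by rewrite /= uQ orbT.
      by rewrite S2e_sym; apply: S2e_OSb => //; apply: q1.
    have [fQ _ _] := q2 vQ.
    exists (Sb alpha v u).
      by rewrite inE validSb esym huv /= uf (negbTE fQ) /= andbF.
    apply: e'I; first by apply: S2e_SbSb.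
    by rewrite /= uf (negbTE fQ) /= !andbF /= orbT.
  + move=> hl _; have [u hu] := hasnb v.
    exists (Sb alpha v u).
      rewrite inE validSb hu /= (negbTE (leafQ hl)) /=.
      apply/negP => /andP [uQ /eqP vf]; have [_ nl _] := q2 uQ.
      by move: nl; rewrite -vf hl.
    apply: e'I; first by rewrite S2e_sym; apply: S2e_SbLf.
    rewrite /= (negbTE (leafQ hl)) /=; apply/negP => /andP [uQ /eqP vf].
    by have [_ nl _] := q2 uQ; move: nl; rewrite -vf hl.
  exists mt => x; rewrite inE => /andP [xV xP].
  case: x xV xP => [[v|[u v]]|[v i]] //=; rewrite inE /=.
  + move=> nl vQ; have [fQ fl hf] := q2 vQ.
    split => //.
    * by rewrite inE validSb hf /= (negbTE fQ) /= andbF.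
    * by rewrite vQ eqxx.
    * by apply: e'I; [apply: S2e_OSb | rewrite /= vQ].
  + move=> huv hP; case hb: ((u \in Q) && (v == f u)).
      case/andP: hb => uQ /eqP vf; split => //.
      * by rewrite inE validO q1.
      * by rewrite /= vf.
      * apply: e'I; last by rewrite /= uQ orbT.
        by rewrite S2e_sym; apply: S2e_OSb => //; apply: q1.
    have hP2 : ~~ ((v \in Q) && (u \in Q) || (u \in Q) && (v == f u)).
      by rewrite hb orbF andbC; move: hP; apply: contra => ->.
    split.
    * by rewrite inE validSb esym huv.
    * apply/negP => /eqP [] eq1 _; by move: huv; rewrite eq1 eirr.
    * rewrite /=; have -> : (v \in Q) && (u == f v) = false.
        by apply/negbTE; move: hP; apply: contra => H; rewrite H orbT.
      done.
    * by apply: e'I; [apply: S2e_SbSb | rewrite /= hP].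
Qed.

End Construct.

Section Extract.
Variables (T : finType) (e : rel T) (alpha : T -> nat).
Hypotheses (esym : symmetric e) (eirr : irreflexive e) (eacyc : acyclic e).
Notation leaf := (leafH e).
Notation G := (S2e e alpha).
Notation ST := (S2T alpha).
Notation V := (S2V e alpha).
Hypothesis apos : forall v, leaf v -> 0 < alpha v.
Variable e' : rel ST.
Hypotheses (sub : subrel e' G) (e'sym : symmetric e').
Variables (D P : {set ST}) (m : ST -> ST).
Hypotheses (hDP : D :&: P = set0) (hV : D :|: P = V)
  (domD : forall x, x \in V -> x \notin D -> exists2 y, y \in D & e' x y)
  (domP : forall x, x \in V -> x \notin P -> exists2 y, y \in P & e' x y)
  (hm : forall x, x \in P -> [/\ m x \in P, m x != x, m (m x) = x & e' x (m x)]).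

Lemma PnD x : x \in P -> x \notin D.
Proof.
move=> xP; apply/negP => xD.
have H : x \in D :&: P by rewrite inE xD xP.
by rewrite hDP inE in H.
Qed.
Lemma PV x : x \in P -> x \in V.
Proof. by move=> xP; rewrite -hV inE xP orbT. Qed.
Lemma DV x : x \in D -> x \in V.
Proof. by move=> xD; rewrite -hV inE xD. Qed.
Lemma DorP x : x \in V -> x \notin P -> x \in D.
Proof. by rewrite -hV inE => /orP [] // ->. Qed.
Lemma DnP x : x \in D -> x \notin P.
Proof. by move=> xD; apply/negP => /PnD; rewrite xD. Qed.

Lemma Lf_D v i : leaf v -> Lf alpha v i \in D.
Proof.
move=> hl; have xV : Lf alpha v i \in V by rewrite validLf.
case: (boolP (Lf alpha v i \in P)) => xP; last by apply: DorP.
have [mP _ _ me] := hm xP.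
have [_ [u [hu mu]]] := S2eP_Lf (sub me).
have [y yD ye] := domD xV (PnD xP).
have [_ [u' [hu' yu]]] := S2eP_Lf (sub ye).
have uu := leaf_uniq hl hu hu'.
by move: (PnD mP); rewrite mu uu -yu yD.
Qed.

Lemma lfP v u : leaf v -> e v u -> Sb alpha v u \in P.
Proof.
move=> hl hu; have xD := Lf_D (Ordinal (apos hl)) hl.
have [y yP ye] := domP (DV xD) (DnP xD).
have [_ [u' [hu' yu]]] := S2eP_Lf (sub ye).
by rewrite (leaf_uniq hl hu hu') -yu.
Qed.

Definition Sset := [set x | O alpha x \in P].
Definition fm x := match m (O alpha x) with inl (inr (_, w)) => w | _ => x end.

Lemma F0 x : x \in Sset -> [/\ m (O alpha x) = Sb alpha x (fm x), e x (fm x) & ~~ leaf x].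
Proof.
rewrite inE => xP; have [mP _ _ me] := hm xP.
have [nl [v [hv mv]]] := S2eP_O (sub me).
by rewrite /fm mv.
Qed.

Lemma F1 x : x \in Sset -> Sb alpha (fm x) x \in D /\ ~~ leaf (fm x).
Proof.
move=> xS; have [mx hx nl] := F0 xS; move: (xS); rewrite inE => xP.
have [mP _ _ _] := hm xP; rewrite mx in mP.
have [y yD ye] := domD (PV mP) (PnD mP).
have [_ [yv|[[yO _]|[hl _]]]] := S2eP_Sb esym (sub ye).
- rewrite -yv; split => //; apply/negP => hl.
  by move: (PnD (lfP hl (symI esym hx))); rewrite -yv yD.
- by move: (PnD xP); rewrite -yO yD.
- by move: nl; rewrite hl.
Qed.

Lemma F2 x v : x \in Sset -> e x v -> v != fm x -> v \in Sset.
Proof.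
move=> xS hv vf; have [mx hx nl] := F0 xS; move: (xS); rewrite inE => xP.
have qD : Sb alpha x v \in D.
  apply: DorP; first by rewrite validSb.
  apply/negP => qP; have [mP _ mm me] := hm qP.
  have [_ [mq|[[mq _]|[hl _]]]] := S2eP_Sb esym (sub me).
  - have [y yD ye] := domD (PV qP) (PnD qP).
    have [_ [yv|[[yO _]|[hl _]]]] := S2eP_Sb esym (sub ye).
    + by move: (PnD mP); rewrite mq -yv yD.
    + by move: (PnD xP); rewrite -yO yD.
    + by move: nl; rewrite hl.
  - move: mm; rewrite mq mx => -[] vf'.
    by move: vf; rewrite vf' eqxx.
  - by move: nl; rewrite hl.
case hl: (leaf v).
  have rP := lfP hl (symI esym hv); have [mP _ _ me] := hm rP.
  have [_ [mq|[[mq nl2]|[_ [i mq]]]]] := S2eP_Sb esym (sub me).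
  - by move: (PnD mP); rewrite mq qD.
  - by move: nl2; rewrite hl.
  - by move: (PnD mP); rewrite mq Lf_D.
have rV : Sb alpha v x \in V by rewrite validSb esym.
case: (boolP (Sb alpha v x \in P)) => rP.
  have [mP _ _ me] := hm rP.
  have [_ [mq|[[mq nl2]|[hl2 _]]]] := S2eP_Sb esym (sub me).
  - by move: (PnD mP); rewrite mq qD.
  - by rewrite inE -mq.
  - by move: hl; rewrite hl2.
have [y yP ye] := domP rV rP.
have [_ [mq|[[mq nl2]|[hl2 _]]]] := S2eP_Sb esym (sub ye).
- by move: (PnD yP); rewrite mq qD.
- by rewrite inE -mq.
- by move: hl; rewrite hl2.
Qed.

Lemma F3 x : x \in Sset -> fm x \in Sset -> fm (fm x) != x.
Proof.
move=> xS fS; apply/negP => /eqP ffx.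
have [mx _ _] := F0 fS; have [hD _] := F1 xS.
move: fS; rewrite inE => fP; have [mP _ _ _] := hm fP.
by move: (PnD mP); rewrite mx ffx hD.
Qed.

Lemma Snon : (exists a c, G a c && ~~ e' a c) -> exists x, x \in Sset.
Proof.
move=> [a [c /andP [hG hn]]].
case: (boolP [exists x, x \in Sset]) => [/existsP [x xS]|]; first by exists x.
rewrite negb_exists => /forallP nS; exfalso.
have OD x : ~~ leaf x -> O alpha x \in D.
  move=> nl; apply: DorP; first by rewrite validO.
  by move: (nS x); rewrite inE.
have SbP u v : e u v -> Sb alpha u v \in P.
  move=> huv; case hl: (leaf u); first by apply: lfP.
  apply/negPn/negP => qnP.
  have qD : Sb alpha u v \in D by apply: DorP; rewrite ?validSb.
  have [y yP ye] := domP (DV qD) qnP.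
  have [_ [yq|[[yq _]|[hl2 _]]]] := S2eP_Sb esym (sub ye).
  - have [mP _ _ me] := hm yP; rewrite yq in mP me.
    have [_ [mq|[[mq nl2]|[hl2 [i mq]]]]] := S2eP_Sb esym (sub me).
    + by move: (PnD mP); rewrite mq qD.
    + by move: (PnD mP); rewrite mq OD.
    + by move: (PnD mP); rewrite mq Lf_D.
  - by move: (PnD yP); rewrite yq OD ?hl.
  - by move: hl; rewrite hl2.
have key x y : G x y -> e' x y.
  case: x => [[x|[u v]]|[v i]].
  - move=> /S2eP_O [nl [w [hw ->]]].
    have qP := SbP _ _ hw; have [z yD ye] := domD (PV qP) (PnD qP).
    have [_ [yq|[[yq _]|[hl2 _]]]] := S2eP_Sb esym (sub ye).
    + by move: (PnD (SbP _ _ (symI esym hw))); rewrite -yq yD.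
    + by rewrite e'sym -yq.
    + by move: nl; rewrite hl2.
  - move=> /(S2eP_Sb esym) [huv [->|[[-> nl]|[hl [i ->]]]]].
    + have qP := SbP _ _ huv; have [mP _ _ me] := hm qP.
      have [_ [mq|[[mq nl2]|[hl2 [i mq]]]]] := S2eP_Sb esym (sub me).
      * by rewrite -mq.
      * by move: (PnD mP); rewrite mq OD.
      * by move: (PnD mP); rewrite mq Lf_D.
    + have qP := SbP _ _ huv; have [z yD ye] := domD (PV qP) (PnD qP).
      have [_ [yq|[[yq _]|[hl2 _]]]] := S2eP_Sb esym (sub ye).
      * by move: (PnD (SbP _ _ (symI esym huv))); rewrite -yq yD.
      * by rewrite -yq.
      * by move: nl; rewrite hl2.
    + have xD := Lf_D i hl; have [z yP ye] := domP (DV xD) (DnP xD).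
      have [_ [u' [hu' yu]]] := S2eP_Lf (sub ye).
      by rewrite e'sym (leaf_uniq hl huv hu') -yu.
  - move=> /S2eP_Lf [hl [u [hu ->]]].
    have xD := Lf_D i hl; have [z yP ye] := domP (DV xD) (DnP xD).
    have [_ [u' [hu' yu]]] := S2eP_Lf (sub ye).
    by rewrite (leaf_uniq hl hu hu') -yu.
by move: hn; rewrite key.
Qed.

End Extract.

Section Closure.
Variables (T : finType) (e : rel T).
Hypotheses (esym : symmetric e) (eirr : irreflexive e) (eacyc : acyclic e).
Notation leaf := (leafH e).
Variables (S : {set T}) (f : T -> T).
Hypotheses (h0 : forall x, x \in S -> e x (f x) /\ ~~ leaf x)
  (h1 : forall x, x \in S -> ~~ leaf (f x))
  (h2 : forall x v, x \in S -> e x v -> v != f x -> v \in S)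
  (hne : exists x, x \in S).

Definition R : rel T := fun z w => (z \in S) && e z w && (w != f z).
Definition good (C : {set T}) :=
  [&& C != set0, C \subset S & [forall z in C, forall w, R z w ==> (w \in C)]].

Lemma goodS : good S.
Proof.
apply/and3P; split => //.
  by case: hne => x xS; apply/set0Pn; exists x.
apply/forallP => z; apply/implyP => zS; apply/forallP => w; apply/implyP.
by case/andP => /andP [_ hw] wf; apply: h2 hw wf.
Qed.

Lemma conn_closed (C : {set T}) x y : good C -> x \in C -> connect R x y -> y \in C.
Proof.
case/and3P => _ _ /forallP cl xC /connectP [p hp ->].
elim: p x xC hp => [|z p IH] x xC //= /andP [hxz hp].
apply: IH hp; move: (cl x); rewrite xC /= => /forallP /(_ z).
by rewrite hxz.
Qed.

Lemma subS (C : {set T}) x : good C -> x \in C -> x \in S.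
Proof. by case/and3P => _ /subsetP h _ /h. Qed.

Lemma path_restrict (C : {set T}) x p : good C -> x \in C -> path R x p ->
  path [rel a b | e a b && (a \in C) && (b \in C)] x p /\ all (fun z => z \in C) p.
Proof.
move=> gC; elim: p x => [|z p IH] x xC //= /andP [hxz hp].
have zC : z \in C by apply: (conn_closed gC xC); apply: connect1.
have [h1' h2'] := IH z zC hp.
split; last by rewrite zC.
rewrite /= h1' xC zC !andbT; by case/andP: hxz => /andP [].
Qed.

Theorem extract_Q : exists (VQ : {set T}) (eQ : rel T),
     [/\ is_tree VQ eQ, subrel eQ e,
         (forall x, x \in VQ ->
            ~~ is_leaf [set: T] e x && ~~ is_support [set: T] e x),
         (exists f : T -> T,
            {in VQ &, injective f} /\
            forall x, x \in VQ ->
              [/\ f x \notin VQ, ~~ is_leaf [set: T] e (f x) & e x (f x)]) &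
         (forall x, x \in VQ -> deg [set: T] e x = (deg VQ eQ x).+1)].
Proof.
case: (@arg_minnP _ S good (fun C => #|C|) goodS) => Q gQ minQ.
have allc x y : x \in Q -> y \in Q -> connect R x y.
  move=> xQ yQ; pose C := [set z | connect R x z].
  have gC : good C.
    apply/and3P; split.
    - by apply/set0Pn; exists x; rewrite inE connect0.
    - by apply/subsetP => z; rewrite inE => /(conn_closed gQ xQ) /(subS gQ).
    - apply/forallP => z; apply/implyP; rewrite inE => hz.
      apply/forallP => w; apply/implyP => hw; rewrite inE.
      by apply: (connect_trans hz); apply: connect1.
  have sCQ : C \subset Q by apply/subsetP => z; rewrite inE => /(conn_closed gQ xQ).
  have := minQ C gC => hc.
  have /eqP CQ : C == Q by rewrite eqEcard sCQ hc.
  by move: yQ; rewrite -CQ inE.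
have QS x : x \in Q -> x \in S by apply: subS.
have fnQ x : x \in Q -> f x \notin Q.
  move=> xQ; apply/negP => fQ.
  have [hx _] := h0 (QS _ xQ).
  case/connectP: (allc _ _ xQ fQ) => p hp hl.
  move: hl; case: (shortenP hp) => p' hp' hu _ hl'.
  apply: (no_cycle eacyc (a := x) (p := p')) => //.
  - by apply: sub_path hp' => a b /andP [/andP []].
  - case: p' hp' hu hl' => [|z [|z' p'']] //=.
      by move=> _ _ hz; move: hx; rewrite hz eirr.
    by move=> hR _ hz; move: hR; rewrite /R -hz eqxx /= !andbF.
  - by rewrite -hl' esym.
pose eQ : rel T := [rel a b | e a b && (a \in Q) && (b \in Q)].
exists Q, eQ; split.
- split.
  + split.
    * move=> a b; rewrite /eQ /= esym; by case: (a \in Q); case: (b \in Q); rewrite ?andbF ?andbT.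
    * by move=> a; rewrite /eQ /= eirr.
    * by move=> a b; rewrite /eQ /= => /andP [/andP [_ ->] ->].
  + split; first by case/and3P: gQ.
    move=> a b aQ bQ; case/connectP: (allc _ _ aQ bQ) => p hp ->.
    apply/connectP; exists p => //; by case: (path_restrict gQ aQ hp).
  + move=> s hu hs; move: (eacyc hu hs); apply: contra => hc.
    by apply: (sub_cycle _ hc) => a b; rewrite /eQ /= => /andP [/andP []].
- by move=> a b; rewrite /eQ /= => /andP [/andP []].
- move=> x xQ; have [hx nl] := h0 (QS _ xQ); rewrite nl /=.
  apply/negP => /andP [_ /existsP [y /andP [hy hly]]].
  case: (eqVneq y (f x)) => [yf|yf].
    by move: (h1 (QS _ xQ)); rewrite -yf /leafH hly.
  by have [_ nl2] := h0 (h2 (QS _ xQ) hy yf); move: nl2; rewrite /leafH hly.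
- exists f; split.
    move=> a b aQ bQ fab; apply/eqP/negPn/negP => ab.
    have [ha _] := h0 (QS _ aQ); have [hb _] := h0 (QS _ bQ).
    case/connectP: (allc _ _ aQ bQ) => p hp hl.
    move: hl; case: (shortenP hp) => p' hp' hu sub' hl'.
    have [hpe allQ] := path_restrict gQ aQ hp'.
    apply: (no_cycle eacyc (a := a) (p := rcons p' (f a))).
    + rewrite rcons_path -hl' fab hb andbT.
      by apply: sub_path hp' => u w /andP [/andP []].
    + rewrite -cats1 -cat_cons cat_uniq hu /= andbT orbF.
      apply/negP => /orP [/eqP fa|hin].
        by move: (fnQ _ aQ); rewrite fa aQ.
      by move/allP: allQ => /(_ _ hin) hQ; move: (fnQ _ aQ); rewrite hQ.
    + rewrite size_rcons ltnS; case: p' hp' hu sub' hl' {hpe allQ} => //= _ _ _ hab.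
      by move: ab; rewrite hab eqxx.
    + by rewrite last_rcons esym.
  move=> x xQ; have [hx _] := h0 (QS _ xQ); split => //; [exact: fnQ | exact: h1 (QS _ xQ)].
- move=> x xQ; rewrite /deg.
  have -> : [set y in [set: T] | e x y] = f x |: [set y in Q | eQ x y].
    apply/setP => y; rewrite !inE /=; have [hx _] := h0 (QS _ xQ).
    case: (eqVneq y (f x)) => [->|yf] /=; first by rewrite hx.
    rewrite /eQ /= xQ; case hy: (e x y); last by rewrite !andbF.
    have yQ : y \in Q by apply: (conn_closed gQ xQ); apply: connect1; rewrite /R QS // hy yf.
    by rewrite yQ.
  by rewrite cardsU1 inE (negbTE (fnQ _ xQ)).
Qed.

End Closure.

Lemma DPDP_mono (T : finType) (V : {set T}) (e1 e2 : rel T) :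
  (forall a c, e1 a c -> e2 a c) -> DPDP V e1 -> DPDP V e2.
Proof.
move=> h [D [P [h1 h2 [hD1 hD2] [[hP1 hP2] [m hm]]]]].
exists D, P; split => //.
- split => // x xV xD; have [y yD hy] := hD2 x xV xD; exists y => //; exact: h.
- split; first split => //.
    move=> x xV xP; have [y yP hy] := hP2 x xV xP; exists y => //; exact: h.
  exists m => x xP; have [? ? ? ?] := hm x xP; split => //; exact: h.
Qed.

Theorem corollary7p4 (T : finType) (e : rel T) (alpha : T -> nat) :
  is_tree [set: T] e -> 2 <= #|T| ->
  (forall v, is_leaf [set: T] e v -> 0 < alpha v) ->
  DPDP (S2V e alpha) (S2e e alpha) /\
  (~ minimal_DPDP (S2V e alpha) (S2e e alpha) <->
   exists (VQ : {set T}) (eQ : rel T),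
     [/\ is_tree VQ eQ, subrel eQ e,
         (forall x, x \in VQ ->
            ~~ is_leaf [set: T] e x && ~~ is_support [set: T] e x),
         (exists f : T -> T,
            {in VQ &, injective f} /\
            forall x, x \in VQ ->
              [/\ f x \notin VQ, ~~ is_leaf [set: T] e (f x) & e x (f x)]) &
         (forall x, x \in VQ -> deg [set: T] e x = (deg VQ eQ x).+1)]).
Proof.
move=> [[esym eirr _] [_ conn] eacyc] card apos.
have hasnb : forall v, exists u, e v u.
  move=> v; have /card_gt1P [a [b [_ _ ab]]] := card.
  have [w wv] : exists w, w != v.
    case: (eqVneq a v) => [av|av]; last by exists a.
    by exists b; rewrite -av eq_sym.
  case/connectP: (conn v w (in_setT _) (in_setT _)) => [[|y p]] /=.
    by move=> _ wv'; move: wv; rewrite wv' eqxx.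
  by case/andP => hy _ _; exists y.
have two' : forall v u, ~~ leafH e v -> exists2 w, e v w & w != u.
  by move=> v u; apply: (@two _ _ hasnb v u).
have dp0 : DPDP (S2V e alpha) (S2e e alpha).
  have r1 : forall x, x \in (set0 : {set T}) -> ~~ leafH e x by move=> x; rewrite inE.
  have r2 : forall x, x \in (set0 : {set T}) ->
      [/\ id x \notin (set0 : {set T}), ~~ leafH e (id x) & e x (id x)].
    by move=> x; rewrite inE.
  have r3 : {in (set0 : {set T}) &, injective id} by [].
  have r4 : forall x v, x \in (set0 : {set T}) -> e x v -> v != id x -> v \in (set0 : {set T}).
    by move=> x v; rewrite inE.
  have r5 : forall x, x \in (set0 : {set T}) -> exists2 y, y \in (set0 : {set T}) & e x y.
    by move=> x; rewrite inE.
  have dpc := @construct _ e alpha esym eirr apos hasnb two' set0 id r1 r2 r3 r4 r5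
      (fun _ _ => false) (fun _ _ h => match h with end).
  by apply: DPDP_mono dpc => a c /andP [].
split => //; split.
- move=> Hnm; apply: NNPP => Hno; apply: Hnm; split => //.
  move=> e'' s sub miss [D [P [hDP hV [_ domD] [[_ domP] [m hm]]]]].
  apply: Hno.
  apply: (@extract_Q _ e esym eirr eacyc (Sset P) (fm m)).
  - by move=> x xS; have [_ ? ?] := F0 sub hm xS.
  - by move=> x xS; have [_ ?] := F1 esym apos sub hDP hV domD domP hm xS.
  - by move=> x v xS hv vf; apply: (F2 esym apos sub hDP hV domD domP hm xS hv vf).
  - by apply: (Snon esym apos sub s hDP hV domD domP hm miss).
- move=> [VQ [eQ [[_ [nz _] _] subQ nls [g [ginj hg]] hdeg]]] [_ Hmin].
  have q1 : forall x, x \in VQ -> ~~ leafH e x.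
    by move=> x /nls /andP [].
  have q4 : forall x v, x \in VQ -> e x v -> v != g x -> v \in VQ.
    move=> x v xQ hv vg; have [gQ _ hx] := hg x xQ.
    pose N := [set y in [set: T] | e x y]; pose NQ := [set y in VQ | eQ x y].
    have sub1 : NQ \subset N :\ g x.
      apply/subsetP => y; rewrite !inE => /andP [yQ hy].
      rewrite (subQ _ _ hy) /= ?andbT; apply/negP => /eqP yg.
      by move: gQ; rewrite -yg yQ.
    have c1 : #|N| = (#|NQ|).+1 by apply: hdeg.
    have c2 : #|N| = (g x \in N) + #|N :\ g x| by apply: cardsD1.
    have gN : g x \in N by rewrite inE in_setT hx.
    rewrite gN in c2.
    have /eqP E : NQ == N :\ g x.
      by rewrite eqEcard sub1 /=; rewrite c1 add1n in c2; case: c2 => ->.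
    have : v \in N :\ g x by rewrite !inE vg hv.
    by rewrite -E inE => /andP [].
  have q5 : forall x, x \in VQ -> exists2 y, y \in VQ & e x y.
    move=> x xQ; have [w hw wg] := two' x (g x) (q1 x xQ).
    by exists w => //; apply: (q4 x).
  have [x0 x0Q] := set0Pn _ nz.
  have [y0 y0Q hxy] := q5 x0 x0Q.
  pose rem : rel (S2T alpha) := fun a c =>
    ((a == Sb alpha x0 y0) && (c == Sb alpha y0 x0)) ||
    ((a == Sb alpha y0 x0) && (c == Sb alpha x0 y0)).
  have remD : forall a c, rem a c -> ~~ inP VQ g a && ~~ inP VQ g c.
    move=> a c /orP [] /andP [/eqP -> /eqP ->] /=; by rewrite x0Q y0Q.
  have dp := @construct _ e alpha esym eirr apos hasnb two' VQ g q1
      (fun x xQ => hg x xQ) ginj q4 q5 rem remD.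
  apply: (Hmin _ _ _ _ dp).
  - move=> a c; rewrite /e' S2e_sym; congr (_ && ~~ _).
    by rewrite /rem orbC; congr (_ || _); apply: andbC.
  - by move=> a c /andP [].
  - exists (Sb alpha x0 y0), (Sb alpha y0 x0).
    by rewrite S2e_SbSb //= /e' S2e_SbSb //= /rem !eqxx.
Qed.
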